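(* Let $f(x)=\mathbb{E}[F(x,\omega)]$ be $\tau$-strongly convex with minimizer $x^*$. Suppose: for every $\omega$, $F(\cdot,\omega)$ is convex and $C^1$, and $f$ is $C^1$ with $L$-Lipschitz gradient; with $\bar w_{k,N_k}\triangleq\nabla f(x_k)-\frac1{N_k}\sum_{j=1}^{N_k}\nabla_xF(x_k,\omega_{j,k})$ there are $\nu_1,\nu_2>0$ such that $\mathbb{E}[\|\bar w_{k,N_k}\|^2\mid\mathcal{F}_k]\le\frac{\nu_1^2\|x_k\|^2+\nu_2^2}{N_k}$ and $\mathbb{E}[\bar w_{k,N_k}\mid\mathcal{F}_k]=0$ a.s. for all $k\ge0$; each $H_k$ is $\mathcal{F}_k$-measurable, symmetric positive definite with $\underline\lambda\mathbf{I}\preceq H_k\preceq\overline\lambda\mathbf{I}$ a.s. for constants $0<\underline\lambda\le\overline\lambda$. Let $x_{k+1}=x_k-\gamma_kH_k\frac1{N_k}\sum_{j=1}^{N_k}\nabla_xF(x_k,\omega_{j,k})$ with $\gamma_k=\frac{1}{L\overline\lambda}$ for all $k\ge0$, where $\{N_k\}_{k\ge0}$ is an increasing sequence of positive integers with $\sum_{k=0}^\infty\frac1{N_k}<\infty$ and $N_0>\frac{2\nu_1^2\overline\lambda}{\tau^2\underline\lambda}$. Then $\lim_{k\to\infty}f(x_k)=f(x^* )$ almost surely.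
   Context: $(\Omega,\mathcal{F},\mathbb{P})$ is a probability space and $F(x,\omega)$ abbreviates $F(x,\xi(\omega))$ for a random vector $\xi$; $\omega_{1,k},\dots,\omega_{N_k,k}$ are the samples at iteration $k$, $x_0$ is given, and $\mathcal{F}_k\triangleq\sigma\{x_0,\dots,x_{k-1}\}$. *)

(* Defs.v *)
From HB Require Import structures.
From mathcomp Require Import all_boot all_order all_algebra.
From mathcomp Require Import all_classical all_reals all_analysis.
Set Implicit Arguments. Unset Strict Implicit. Unset Printing Implicit Defensive.
Import Order.TTheory GRing.Theory Num.Theory.
Import numFieldNormedType.Exports.
Local Open Scope classical_set_scope.
Local Open Scope ring_scope.

Definition dotv {R : realType} {n : nat} (u v : 'cV[R]_n) : R := (u^T *m v) 0 0.

(* Euclidean norm ||v||_2 (the library norm on matrices is the sup norm). *)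
Definition enorm {R : realType} {n : nat} (v : 'cV[R]_n) : R :=
  Num.sqrt (\sum_(i < n) v i 0 ^+ 2).

Definition is_gradient {R : realType} {n : nat}
  (f : 'cV[R]_n -> R) (g : 'cV[R]_n -> 'cV[R]_n) : Prop :=
  forall x, differentiable f x /\ forall h, 'd f x h = dotv (g x) h.

Definition C1_with_gradient {R : realType} {n : nat}
  (f : 'cV[R]_n -> R) (g : 'cV[R]_n -> 'cV[R]_n) : Prop :=
  is_gradient f g /\ continuous g.

Definition convex_fun {R : realType} {n : nat} (f : 'cV[R]_n -> R) : Prop :=
  forall x y (t : R), 0 <= t <= 1 ->
    f (t *: x + (1 - t) *: y) <= t * f x + (1 - t) * f y.

Definition strongly_convex {R : realType} {n : nat} (tau : R)
  (f : 'cV[R]_n -> R) : Prop :=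
  forall x y (t : R), 0 <= t <= 1 ->
    f (t *: x + (1 - t) *: y)
      <= t * f x + (1 - t) * f y - tau / 2 * t * (1 - t) * enorm (x - y) ^+ 2.

Definition iterate_filtration {d} {T : measurableType d} {R : realType} {n : nat}
  (x : nat -> T -> 'cV[R]_n) (k : nat) : set (set T) :=
  <<s [set A | exists (i : nat) (j : 'I_n) (B : set R),
          (i <= k)%N /\ measurable B /\ A = (fun w => x i w j 0) @^-1` B] >>.

Definition measurable_wrt {d} {T : measurableType d} {R : realType}
  (G : set (set T)) (Y : T -> R) : Prop :=
  forall B : set R, measurable B -> G (Y @^-1` B).

Definition cond_exp_version {d} {T : measurableType d} {R : realType}
  (P : probability T R) (G : set (set T)) (X Y : T -> R) : Prop :=
  [/\ P.-integrable setT (EFin \o X), P.-integrable setT (EFin \o Y),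
      measurable_wrt G Y &
      forall A, G A -> (\int[P]_(w in A) (X w)%:E = \int[P]_(w in A) (Y w)%:E)%E].

(* Main.v *)
Require Import Defs.
From HB Require Import structures.
From mathcomp Require Import all_boot all_order all_algebra.
From mathcomp Require Import all_classical all_reals all_analysis.
From mathcomp Require Import ring lra.
From mathcomp Require Import measurable_realfun.
Import Order.TTheory GRing.Theory Num.Theory.
Import numFieldNormedType.Exports.
Local Open Scope classical_set_scope.
Local Open Scope ring_scope.

Section LA.
Context {R : realType} {n : nat}.
Implicit Types u v w : 'cV[R]_n.

Lemma dotvE u v : dotv u v = \sum_(i < n) u i 0 * v i 0.
Proof. by rewrite /dotv !mxE; apply: eq_bigr => i _; rewrite mxE. Qed.

Lemma dotvC u v : dotv u v = dotv v u.
Proof. by rewrite !dotvE; apply: eq_bigr => i _; rewrite mulrC. Qed.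

Lemma dotvDl u v w : dotv (u + v) w = dotv u w + dotv v w.
Proof. by rewrite !dotvE -big_split; apply: eq_bigr => i _; rewrite !mxE mulrDl. Qed.

Lemma dotvDr u v w : dotv w (u + v) = dotv w u + dotv w v.
Proof. by rewrite dotvC dotvDl !(dotvC w). Qed.

Lemma dotvZl (a : R) u v : dotv (a *: u) v = a * dotv u v.
Proof. by rewrite !dotvE mulr_sumr; apply: eq_bigr => i _; rewrite !mxE mulrA. Qed.

Lemma dotvZr (a : R) u v : dotv u (a *: v) = a * dotv u v.
Proof. by rewrite dotvC dotvZl dotvC. Qed.

Lemma dotvNl u v : dotv (- u) v = - dotv u v.
Proof. by rewrite -scaleN1r dotvZl mulN1r. Qed.

Lemma dotvNr u v : dotv u (- v) = - dotv u v.
Proof. by rewrite dotvC dotvNl dotvC. Qed.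

Lemma dotvBl u v w : dotv (u - v) w = dotv u w - dotv v w.
Proof. by rewrite dotvDl dotvNl. Qed.

Lemma dotvBr u v w : dotv w (u - v) = dotv w u - dotv w v.
Proof. by rewrite dotvDr dotvNr. Qed.

Lemma dotv_ge0 u : 0 <= dotv u u.
Proof. by rewrite dotvE; apply: sumr_ge0 => i _; rewrite -expr2 sqr_ge0. Qed.

Lemma enorm_sq u : enorm u ^+ 2 = dotv u u.
Proof.
rewrite /enorm sqr_sqrtr ?dotvE; last by apply: sumr_ge0 => i _; rewrite sqr_ge0.
by apply: eq_bigr => i _; rewrite expr2.
Qed.

Lemma enorm_ge0 u : 0 <= enorm u.
Proof. exact: sqrtr_ge0. Qed.

Lemma dotv_mulmx (M : 'M[R]_n) u v : dotv u (M *m v) = dotv (M^T *m u) v.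
Proof. by rewrite /dotv trmx_mul trmxK mulmxA. Qed.

Lemma dotv_sym (M : 'M[R]_n) u v : M^T = M -> dotv u (M *m v) = dotv (M *m u) v.
Proof. by move=> sM; rewrite dotv_mulmx sM. Qed.


Lemma psd_cross (H : 'M[R]_n) (a b : 'cV[R]_n) (t : R) :
  H^T = H -> (forall v, 0 <= dotv v (H *m v)) ->
  2 * t * dotv a (H *m b) <= dotv a (H *m a) + t ^+ 2 * dotv b (H *m b).
Proof.
move=> sH psd; have := psd (a - t *: b).
rewrite mulmxBr -scalemxAr !dotvBl !dotvBr !dotvZl !dotvZr.
have -> : dotv b (H *m a) = dotv a (H *m b) by rewrite dotv_sym // dotvC.
move=> h; lra.
Qed.

Lemma Hsq (H : 'M[R]_n) (hi : R) v : 0 < hi ->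
  H^T = H -> (forall v, 0 <= dotv v (H *m v)) ->
  (forall v, dotv v (H *m v) <= hi * dotv v v) ->
  dotv (H *m v) (H *m v) <= hi * dotv v (H *m v).
Proof.
move=> hi0 sH psd up.
have h1 := psd_cross H (H *m v) v hi sH psd.
have h2 := up (H *m v).
have : hi * dotv (H *m v) (H *m v) <= hi * (hi * dotv v (H *m v)).
  rewrite mulrA -expr2; lra.
by rewrite ler_pM2l.
Qed.


Lemma step_ineq (f : 'cV[R]_n -> R) (gradf : 'cV[R]_n -> 'cV[R]_n)
  (L lo hi tau fs : R) (H : 'M[R]_n) (x w : 'cV[R]_n) :
  0 < L -> 0 < lo -> lo <= hi -> 0 < tau ->
  (forall y z, f z <= f y + dotv (gradf y) (z - y) + L / 2 * dotv (z - y) (z - y)) ->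
  tau * (f x - fs) <= dotv (gradf x) (gradf x) ->
  H^T = H -> (forall v, lo * dotv v v <= dotv v (H *m v) <= hi * dotv v v) ->
  f (x - (L * hi)^-1 *: (H *m (gradf x - w))) - fs <=
    (1 - lo * tau / (4 * L * hi)) * (f x - fs) + 9 / (2 * L) * dotv w w.
Proof.
move=> L0 lo0 lohi tau0 desc PL sH Hb.
have hi0 : 0 < hi by apply: lt_le_trans lohi.
have psd v : 0 <= dotv v (H *m v).
  have /andP[h _] := Hb v; apply: le_trans h.
  by apply: mulr_ge0; [apply: ltW|apply: dotv_ge0].
have up v : dotv v (H *m v) <= hi * dotv v v by case/andP: (Hb v).
set g := (L * hi)^-1.
have g0 : 0 < g by rewrite invr_gt0 mulr_gt0.
have gLhi : L * hi * g = 1 by rewrite mulfV // gt_eqF // mulr_gt0.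
set a := gradf x.
set d := H *m (a - w).
have := desc x (x - g *: d).
have -> : x - g *: d - x = - (g *: d) by rewrite addrC addKr.
rewrite dotvNr dotvNl dotvNr opprK !dotvZl !dotvZr.
rewrite /d mulmxBr !dotvBr !dotvBl.
have h3 := psd_cross H a w 4 sH psd.
have p1 := Hsq H hi a hi0 sH psd up.
have p2 := Hsq H hi w hi0 sH psd up.
have cw := up w.
have la : lo * dotv a a <= dotv a (H *m a) by case/andP: (Hb a).
have c0 : 0 <= dotv (2^-1 *: (H *m a) + 2 *: (H *m w)) (2^-1 *: (H *m a) + 2 *: (H *m w)) by exact: dotv_ge0.
rewrite !dotvDl !dotvDr !dotvZl !dotvZr in c0.
rewrite [dotv (H *m w) (H *m a)]dotvC in c0 *.
set A := dotv a (H *m a) in h3 p1 la *.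
set B := dotv a (H *m w) in h3 *.
set Cw := dotv w (H *m w) in h3 p2 cw *.
set P1 := dotv (H *m a) (H *m a) in p1 c0 *.
set P2 := dotv (H *m w) (H *m w) in p2 c0 *.
set C := dotv (H *m a) (H *m w) in c0 *.
set W := dotv w w in cw *.
set aa := dotv a a in la PL *.
set V := f x - fs in PL *.
move=> hd.
have hdd : P1 - C - (C - P2) <= 5/4 * hi * A + 5 * hi * Cw.
  have : P1 - C - (C - P2) <= 5/4 * P1 + 5 * P2 by lra.
  move=> h; apply: (le_trans h); lra.
have hdd' : L / 2 * (g * (g * (P1 - C - (C - P2)))) <= L / 2 * (g * (g * (5/4 * hi * A + 5 * hi * Cw))).
  by rewrite ler_pM2l ?divr_gt0 // ler_pM2l // ler_pM2l.
have e1 : L / 2 * (g * (g * (5/4 * hi * A + 5 * hi * Cw))) = g * (5/8 * A + 5/2 * Cw).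
  by rewrite /g; field; rewrite !gt_eqF.
have hB : g * B <= g * (A / 8 + 2 * Cw) by rewrite ler_pM2l //; lra.
have hC : g * Cw <= g * (hi * W) by rewrite ler_pM2l.
have eW : g * (hi * W) = W / L by rewrite /g; field; rewrite !gt_eqF.
have hA : g * (lo * tau * V) <= g * A.
  rewrite ler_pM2l //; apply: le_trans la; rewrite -mulrA ler_pM2l //.
have eA : g * (lo * tau * V) = lo * tau / (4 * L * hi) * V * 4.
  rewrite /g; field; rewrite !gt_eqF //.
have e9 : 9 / (2 * L) * W = 9 / 2 * (W / L) by field; rewrite gt_eqF.
have eV : V = f x - fs by [].
rewrite e9; lra.
Qed.

End LA.

Section Cal.
Context {R : realType} {n : nat}.

Lemma line_fun_eq (f : 'cV[R]_n -> R) (x h : 'cV[R]_n) (t : R) :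
  (fun s : R => s^-1 *: (((fun s => f (x + s *: h)) \o shift t) (s *: 1) - f (x + t *: h)))
  = (fun s : R => s^-1 *: ((f \o shift (x + t *: h)) (s *: h) - f (x + t *: h))).
Proof.
apply/funext => s /=; congr (_ *: (_ - _)); congr f.
have -> : s%:A = s :> R by rewrite [LHS]mulr1.
by rewrite /shift /= scalerDl addrCA addrA.
Qed.

Lemma line_derive (f : 'cV[R]_n -> R) g (x h : 'cV[R]_n) (t : R) :
  is_gradient f g ->
  derivable (fun s : R => f (x + s *: h)) t 1 /\
  'D_1 (fun s : R => f (x + s *: h)) t = dotv (g (x + t *: h)) h.
Proof.
move=> gr; have [df dfe] := gr (x + t *: h).
rewrite /derivable /derive line_fun_eq; split.
  exact: diff_derivable.
have := deriveE h df; rewrite /derive => ->; exact: dfe.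
Qed.


Lemma descent (f : 'cV[R]_n -> R) g (L : R) : 0 < L -> is_gradient f g ->
  (forall y z, enorm (g y - g z) <= L * enorm (y - z)) ->
  forall y z, f z <= f y + dotv (g y) (z - y) + L / 2 * dotv (z - y) (z - y).
Proof.
move=> L0 gr lip y z.
set h := z - y.
set c1 := dotv (g y) h.
set c2 := L / 2 * dotv h h.
pose phi := fun s : R => f (y + s *: h).
have Hphi (t : R) : is_derive t 1 phi (dotv (g (y + t *: h)) h).
  have [d1 d2] := line_derive f g y h t gr.
  by apply: DeriveDef.
pose psi := phi - (@idfun R) * cst c1 - ((@idfun R) ^+ 2) * cst c2.
have Hpsi (t : R) : is_derive t 1 psi (dotv (g (y + t *: h)) h - c1 - 2 * t * c2).
  apply: is_derive_eq.
  rewrite /= !scaler0 !add0r expr1 [_%:A]mulr1 [(2 * t)%:A]mulr1.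
  by rewrite [c2 *: _]mulrC mulrA.
have Dle (t : R) : 0 < t -> dotv (g (y + t *: h)) h - c1 - 2 * t * c2 <= 0.
  move=> t0; set u := g (y + t *: h) - g y.
  have e1 : dotv (g (y + t *: h)) h - c1 = dotv u h by rewrite /u dotvBl.
  rewrite e1.
  have l1 := lip (y + t *: h) y; rewrite addrAC subrr add0r -/u in l1.
  clearbody u.
  have l2 : dotv u u <= L ^+ 2 * (t ^+ 2 * dotv h h).
    have e : dotv (t *: h) (t *: h) = t ^+ 2 * dotv h h by rewrite dotvZl dotvZr mulrA expr2.
    rewrite -e -!enorm_sq.
    have := enorm_ge0 u; have := enorm_ge0 (t *: h); nra.
  have l3 := dotv_ge0 (u - (L * t) *: h).
  rewrite !dotvBl !dotvBr !dotvZl !dotvZr in l3.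
  rewrite [dotv h u]dotvC in l3.

  have Lt0 : 0 < L * t by rewrite mulr_gt0.
  have : (L * t) * (2 * dotv u h) <= (L * t) * (2 * (t * L * dotv h h)).
    have -> : (L * t) * (2 * (t * L * dotv h h)) = 2 * (L ^+ 2 * (t ^+ 2 * dotv h h)) by ring.
    lra.
  rewrite ler_pM2l // /c2 => h4.
  have -> : 2 * t * (L / 2 * dotv h h) = t * L * dotv h h by field.
  lra.
have mono := @ler0_derive1_le_cc R psi 0 1.
have dpsi x : derivable psi x 1 by apply: ex_derive.
have := mono (fun x _ => dpsi x).
have H1 : forall x, x \in `]0, 1[%R -> derive1 psi x <= 0.
  move=> x; rewrite in_itv /= => /andP[x0 _].
  by rewrite derive1E derive_val; apply: Dle.
have H2 : {within `[0, 1], continuous psi}.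
  by apply: derivable_within_continuous => x _.
move=> /(_ H1 H2 1 0); rewrite !in_itv /= !lexx ler01 => /(_ isT isT isT).
have epsi (s : R) : psi s = f (y + s *: h) - s * c1 - s ^+ 2 * c2.
  by rewrite /psi /phi !fctE.
rewrite !epsi scale0r scale1r addr0 /h.
have -> : y + (z - y) = z by rewrite addrC subrK.
rewrite expr1n !mul1r expr0n /= !mul0r !subr0.
lra.
Qed.


Lemma sc_grad (f : 'cV[R]_n -> R) g (tau : R) : 0 < tau -> is_gradient f g ->
  strongly_convex tau f ->
  forall x y, dotv (g x) (y - x) <= f y - f x - tau / 4 * dotv (y - x) (y - x).
Proof.
move=> tau0 gr sc x y.
set h := y - x.
set K := f y - f x - tau / 4 * dotv h h.
pose phi := fun s : R => f (x + s *: h).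
have [d1 d2] := line_derive f g x h 0 gr.
rewrite scale0r addr0 in d2.
rewrite -d2.
set u := (fun s : R => s^-1 *: ((phi \o shift 0) (s *: 1) - phi 0)).
have cvu : u @ 0^' --> 'D_1 phi 0 := d1.
have cvr : u @ 0^'+ --> 'D_1 phi 0.
  move=> A /cvu /nbhs_ballP [_ /posnumP[e] xe_A].
  by exists e%:num => //= z xe_z /gt_eqF/negbT/xe_A; exact.
rewrite -(cvg_lim _ cvr) //.
apply: limr_le; first by apply/cvg_ex; exists ('D_1 phi 0).
near=> s.
have s0 : 0 < s by near: s; exact: nbhs_right_gt.
have s1 : s <= 2^-1 by near: s; apply: nbhs_right_le; rewrite invr_gt0.
rewrite /u /= /shift /phi addr0 scale0r addr0.
have -> : s%:A = s :> R by rewrite [LHS]mulr1.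
have := sc y x s; rewrite (ltW s0) /= (le_trans s1) ?invf_le1 ?ler1n // => /(_ isT).
have -> : s *: y + (1 - s) *: x = x + s *: h.
  by rewrite /h scalerBr scalerBl scale1r addrCA addrA [_ - s *: x]addrC.
rewrite -/h enorm_sq => hs.
have : s^-1 * (f (x + s *: h) - f x) <= s^-1 * (s * K).
  rewrite ler_pM2l ?invr_gt0 //.
  have hh := dotv_ge0 h.
  have p : 0 <= tau * s * dotv h h * (2^-1 - s).
    by rewrite !mulr_ge0 ?subr_ge0 // ltW.
  rewrite /K; lra.
by rewrite mulrA mulVf ?gt_eqF // mul1r.
Unshelve. all: by end_near.
Qed.


Lemma PL_ineq (f : 'cV[R]_n -> R) g (tau : R) xs : 0 < tau -> is_gradient f g ->
  strongly_convex tau f -> (forall y, f xs <= f y) ->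
  forall y, tau * (f y - f xs) <= dotv (g y) (g y).
Proof.
move=> tau0 gr sc fmin y.
have h1 := sc_grad f g tau tau0 gr sc y xs.
set h := xs - y in h1.
have h2 := dotv_ge0 (g y + (tau / 2) *: h).
rewrite !dotvDl !dotvDr !dotvZl !dotvZr [dotv h (g y)]dotvC in h2.
have : tau * (f y - f xs) <= tau * (- dotv (g y) h - tau / 4 * dotv h h).
  rewrite ler_pM2l //; lra.
move=> h3; apply: (le_trans h3).
have -> : tau * (- dotv (g y) h - tau / 4 * dotv h h) =
   - (tau / 2 * dotv (g y) h + tau / 2 * dotv (g y) h + tau / 2 * (tau / 2 * dotv h h)).
  by field.
lra.
Qed.

Lemma growth (f : 'cV[R]_n -> R) (tau : R) xs : 0 < tau ->
  strongly_convex tau f -> (forall y, f xs <= f y) ->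
  forall y, tau / 4 * dotv (y - xs) (y - xs) <= f y - f xs.
Proof.
move=> tau0 sc fmin y.
have := sc y xs 2^-1; rewrite invr_ge0 ler0n invf_le1 ?ler1n // => /(_ isT).
have := fmin (2^-1 *: y + (1 - 2^-1) *: xs).
rewrite enorm_sq; set D := dotv _ _.
have hD : 0 <= D by apply: dotv_ge0.
move=> h1 h2.
have e : 1 - 2^-1 = 2^-1 :> R by field.
rewrite e in h1 h2.
have e2 : tau / 2 * 2^-1 * 2^-1 * D = tau / 4 * D / 2 by field.
lra.
Qed.

Lemma norm_bound (y xs : 'cV[R]_n) :
  dotv y y <= 2 * dotv (y - xs) (y - xs) + 2 * dotv xs xs.
Proof.
have h := dotv_ge0 (y - 2 *: xs).
rewrite !dotvBl !dotvBr !dotvZl !dotvZr [dotv xs y]dotvC in h *.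
lra.
Qed.

End Cal.

Section Seq.
Context {R : realType}.

Lemma sum_ext_le (t : nat -> R) m M : (forall k, 0 <= t k) -> (m <= M)%N ->
  \sum_(0 <= k < m) t k <= \sum_(0 <= k < M) t k.
Proof.
move=> t0 mM; rewrite (@big_cat_nat _ _ _ m 0 M) //= lerDl.
by apply: sumr_ge0 => k _.
Qed.

Lemma series_bound (r : nat -> R) (N : nat -> nat) (rho c b : R) :
  (forall k, 0 <= r k) -> 0 <= rho -> rho < 1 -> 0 <= c -> 0 <= b ->
  (forall k, (0 < N k)%N) -> cvg (series (fun k => ((N k)%:R : R)^-1) @ \oo) ->
  (forall k, r k.+1 <= rho * r k + (c * r k + b) / (N k)%:R) ->
  exists B, forall m, \sum_(0 <= k < m) r k <= B.
Proof.
move=> r0 rho0 rho1 c0 b0 N0 cvN rec.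
set iN := fun k => ((N k)%:R : R)^-1.
have iN0 k : 0 <= iN k by rewrite /iN invr_ge0 ler0n.
set T := limn (series iN).
have sT m : \sum_(0 <= k < m) iN k <= T.
  have := @nondecreasing_cvgn_le _ (series iN) _ cvN m; apply.
  by apply/nondecreasing_seqP => k; rewrite /series /= big_nat_recr //= lerDl.
have eps0 : 0 < (1 - rho) / (2 * (c + 1)).
  by rewrite divr_gt0 ?subr_gt0 // mulr_gt0 // ltr_wpDl.
have [K _ HK] := (cvgrPdist_lt _ _).1 (cvg_series_cvg_0 cvN) _ eps0.
have cK k : (K <= k)%N -> c * iN k <= (1 - rho) / 2.
  move=> Kk; have := HK k Kk; rewrite /= sub0r normrN ger0_norm // => h.
  have h1 : c * iN k <= c * ((1 - rho) / (2 * (c + 1))) by rewrite ler_wpM2l // ltW.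
  apply: (le_trans h1).
  have c10 : 0 < c + 1 by rewrite ltr_wpDl.
  have -> : c * ((1 - rho) / (2 * (c + 1))) = (1 - rho) / 2 * (c / (c + 1)).
    by field; rewrite gt_eqF.
  rewrite ler_piMr ?divr_ge0 ?subr_ge0 ?(ltW rho1) //.
  rewrite ler_pdivrMr // mul1r; lra.
set D0 := \sum_(0 <= k < K) (c * r k * iN k).
set B := 2 * (r 0 + D0 + b * T) / (1 - rho).
exists B => m.
set s := \sum_(0 <= k < m) r k.
have t_le : \sum_(0 <= k < m) (c * r k * iN k) <= D0 + (1 - rho) / 2 * s.
  have : \sum_(0 <= k < m) (c * r k * iN k) <=
     \sum_(0 <= k < m) ((if (k < K)%N then c * r k * iN k else 0) + (1 - rho) / 2 * r k).
    apply: ler_sum => k _; case: ifPn => kK.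
      by rewrite lerDl mulr_ge0 // divr_ge0 // subr_ge0 ltW.
    by rewrite add0r mulrAC ler_wpM2r // cK // leqNgt.
  rewrite big_split /= -mulr_sumr => h; apply: (le_trans h); rewrite lerD2r.
  set ite := fun k => if (k < K)%N then c * r k * iN k else 0.
  have ite0 k : 0 <= ite k.
    by rewrite /ite; case: ifP => // _; rewrite !mulr_ge0.
  apply: (le_trans (sum_ext_le ite m (K + m) ite0 (leq_addl K m))).
  rewrite (@big_cat_nat _ _ _ K 0 (K + m)) //= ?leq_addr //.
  rewrite -[X in _ <= X]addr0; apply: lerD.
    rewrite /D0; rewrite le_eqVlt; apply/orP; left; apply/eqP/eq_big_nat => k /andP[_ kK].
    by rewrite /ite kK.
  rewrite big_nat_cond; rewrite le_eqVlt; apply/orP; left; apply/eqP/big1 => k /andP[/andP[Kk _] _].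
  by rewrite /ite ltnNge Kk.
have sS : s <= \sum_(0 <= k < m.+1) r k by apply: sum_ext_le.
rewrite big_nat_recl // in sS.
have h2 : \sum_(0 <= k < m) r k.+1 <=
    \sum_(0 <= k < m) (rho * r k + c * r k * iN k + b * iN k).
  apply: ler_sum => k _; apply: (le_trans (rec k)).
  by rewrite /iN mulrDl addrA.
rewrite !big_split /= -!mulr_sumr in h2.
have h3 := sT m.
have h4 : b * \sum_(0 <= k < m) iN k <= b * T by rewrite ler_wpM2l.
have h5 : (1 - rho) / 2 * s <= r 0 + D0 + b * T.
  rewrite -/s in h2; lra.
have r1 : 1 - rho != 0 by rewrite subr_eq0 eq_sym lt_eqF.
have -> : s = 2 / (1 - rho) * ((1 - rho) / 2 * s) by field.
have -> : B = 2 / (1 - rho) * (r 0 + D0 + b * T) by rewrite /B; field.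
by rewrite ler_wpM2l // divr_ge0 // subr_ge0 ltW.
Qed.


Lemma fin_series_cvg0 (u : nat -> R) : (forall k, 0 <= u k) ->
  (\sum_(k <oo) (u k)%:E)%E \is a fin_num -> u @ \oo --> 0.
Proof.
move=> u0 fS; apply: cvg_series_cvg_0.
apply: nondecreasing_is_cvgn.
  by apply/nondecreasing_seqP => k; rewrite /series /= big_nat_recr //= lerDl.
exists (fine (\sum_(k <oo) (u k)%:E)%E) => _ [m _ <-].
rewrite /series /=.
have h := @nneseries_lim_ge R (fun k => (u k)%:E) xpredT 0 m (fun k _ _ => u0 k).
rewrite -lee_fin fineK //; apply: le_trans h.
by rewrite sumEFin.
Qed.

End Seq.

Section Meas.
Context {R : realType} {d : measure_display} {Omega : measurableType d}
  (P : probability Omega R).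
Local Open Scope ereal_scope.

Lemma int_lin (F G : Omega -> R) (a b : R) :
  measurable_fun setT F -> measurable_fun setT G ->
  (forall w, (0 <= F w)%R) -> (forall w, (0 <= G w)%R) -> (0 <= a)%R -> (0 <= b)%R ->
  \int[P]_w ((a * F w + b * G w)%R%:E) =
  a%:E * \int[P]_w (F w)%:E + b%:E * \int[P]_w (G w)%:E.
Proof.
move=> mF mG F0 G0 a0 b0.
under eq_integral do rewrite EFinD !EFinM.
rewrite ge0_integralD //; last 4 first.
- by move=> w _; rewrite -EFinM lee_fin mulr_ge0.
- by apply/measurable_EFinP; apply: measurable_funM => //; exact: measurable_cst.
- by move=> w _; rewrite -EFinM lee_fin mulr_ge0.
- by apply/measurable_EFinP; apply: measurable_funM => //; exact: measurable_cst.
rewrite !ge0_integralZl_EFin //.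
- by move=> w _; rewrite lee_fin.
- exact/measurable_EFinP.
- by move=> w _; rewrite lee_fin.
- exact/measurable_EFinP.
Qed.

Lemma int_Y_le (Y Bd : Omega -> R) :
  P.-integrable setT (EFin \o Y) -> measurable_fun setT Bd ->
  (forall w, (0 <= Bd w)%R) -> {ae P, forall w, (Y w <= Bd w)%R} ->
  \int[P]_w (Y w)%:E <= \int[P]_w (Bd w)%:E.
Proof.
move=> iY mB B0 aeY.
rewrite integralE.
apply: (@le_trans _ _ (\int[P]_(w in setT) (EFin \o Y)^\+ w)).
  rewrite leeBlDr; last exact: integrable_neg_fin_num.
  by apply: leeDl; apply: integral_ge0 => w _; exact: funeneg_ge0.
apply: ae_ge0_le_integral => //.
- by apply: measurable_funepos; exact: (measurable_int _ iY).
- by move=> w ?; rewrite lee_fin.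
- exact: ((@measurable_EFinP _ _ _ setT Bd).2 mB).
apply: filterS aeY => w hw _.
by rewrite funeposE ge_max /= !lee_fin hw B0.
Qed.

End Meas.

Fixpoint Useq {T : Type} {R : realType} (V0 rho C : R) (Z : nat -> T -> R) (k : nat) : T -> R :=
  match k with
  | 0 => fun _ => V0
  | k'.+1 => fun w => rho * Useq V0 rho C Z k' w + C * Z k' w
  end.

Theorem mainTheorem3
  (R : realType) (n : nat) (d : measure_display) (Omega : measurableType d)
  (P : probability Omega R) (Xi : Type)
  (F : 'cV[R]_n -> Xi -> R) (gradF : 'cV[R]_n -> Xi -> 'cV[R]_n)
  (xi : Omega -> Xi) (samples : nat -> nat -> Omega -> Xi)
  (f : 'cV[R]_n -> R) (gradf : 'cV[R]_n -> 'cV[R]_n) (xstar : 'cV[R]_n)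
  (tau L nu1 nu2 lam_lo lam_hi : R)
  (H : nat -> Omega -> 'M[R]_n) (N : nat -> nat)
  (x0 : 'cV[R]_n) (x : nat -> Omega -> 'cV[R]_n) :
  (* f(x) = E[F(x, xi)] *)
  (forall y, P.-integrable setT (fun w => (F y (xi w))%:E) /\
             (\int[P]_w (F y (xi w))%:E = (f y)%:E)%E) ->
  0 < tau -> strongly_convex tau f ->
  (forall y, f xstar <= f y) ->
  (* F(., omega) convex and C^1 for every omega *)
  (forall s : Xi, convex_fun (F ^~ s) /\ C1_with_gradient (F ^~ s) (gradF ^~ s)) ->
  (* f is C^1 with L-Lipschitz gradient *)
  0 < L -> C1_with_gradient f gradf ->
  (forall y z, enorm (gradf y - gradf z) <= L * enorm (y - z)) ->
  (* sample sizes *)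
  (forall k, (0 < N k)%N) -> {homo N : i j / (i <= j)%N} ->
  cvg (series (fun k => ((N k)%:R : R)^-1) @ \oo) ->
  (* spectral bounds on H_k *)
  0 < lam_lo -> lam_lo <= lam_hi ->
  (N 0)%:R > 2 * nu1 ^+ 2 * lam_hi / (tau ^+ 2 * lam_lo) ->
  (* the iterates are random vectors, x_0 is given, and the recursion holds *)
  (forall k (i : 'I_n), measurable_fun setT (fun w => x k w i 0)) ->
  (forall w, x 0 w = x0) ->
  (forall k w, x k.+1 w =
     x k w - (L * lam_hi)^-1 *:
       (H k w *m ((N k)%:R^-1 *: \sum_(j < N k) gradF (x k w) (samples k j w)))) ->
  (* H_k is F_k-measurable, symmetric, lam_lo I <= H_k <= lam_hi I a.s. *)
  (forall k (i j : 'I_n), measurable_wrt (iterate_filtration x k) (fun w => H k w i j)) ->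
  (forall k, {ae P, forall w, (H k w)^T = H k w /\
       forall v : 'cV[R]_n, lam_lo * dotv v v <= dotv v (H k w *m v) <= lam_hi * dotv v v}) ->
  (* noise assumptions *)
  0 < nu1 -> 0 < nu2 ->
  (forall k, let wbar := fun w => gradf (x k w) -
        (N k)%:R^-1 *: \sum_(j < N k) gradF (x k w) (samples k j w) in
     (exists Y, cond_exp_version P (iterate_filtration x k)
                  (fun w => enorm (wbar w) ^+ 2) Y /\
        {ae P, forall w, Y w <= (nu1 ^+ 2 * enorm (x k w) ^+ 2 + nu2 ^+ 2) / (N k)%:R}) /\
     (forall i : 'I_n, exists Y, cond_exp_version P (iterate_filtration x k)
                  (fun w => wbar w i 0) Y /\ {ae P, forall w, Y w = 0})) ->
  {ae P, forall w, (fun k => f (x k w)) @ \oo --> f xstar}.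
Proof.
move=> hF tau0 sc fmin hFc L0 [gr gc] lip Npos Nmono cvN lo0 lohi hN0 mx hx0 rec
  mH hH nu10 nu20 noise.
set fs := f xstar.
have hi0 : 0 < lam_hi by apply: lt_le_trans lohi.
set rho0 := 1 - lam_lo * tau / (4 * L * lam_hi).
set rho := Num.max rho0 2^-1.
have rho_ge0 : 0 <= rho by rewrite le_max invr_ge0 ler0n orbT.
have rho0_le : rho0 <= rho by rewrite le_max lexx.
have rho_lt1 : rho < 1.
  rewrite gt_max; apply/andP; split.
    rewrite /rho0 ltrBlDr ltrDl.
    by rewrite divr_gt0 ?mulr_gt0.
  by rewrite invf_lt1 ?ltr1n.
set Cn := 9 / (2 * L).
have Cn0 : 0 <= Cn by rewrite divr_ge0 // mulr_ge0 // ltW.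
pose wbar k w := gradf (x k w) - (N k)%:R^-1 *: \sum_(j < N k) gradF (x k w) (samples k j w).
pose Z k w := enorm (wbar k w) ^+ 2.
pose U := Useq (f x0 - fs) rho Cn Z.
have desc := descent f gradf L L0 gr lip.
have PL := PL_ineq f gradf tau xstar tau0 gr sc fmin.
have gro := growth f tau xstar tau0 sc fmin.
have aeH := ae_foralln hH.
have Z0 k w : 0 <= Z k w by rewrite /Z exprn_ge0 // enorm_ge0.
have U0 k w : 0 <= U k w.
  elim: k => [|k IH] /=; first by rewrite subr_ge0 fmin.
  by rewrite addr_ge0 // mulr_ge0.
have VU w : (forall k, (H k w)^T = H k w /\ forall v,
    lam_lo * dotv v v <= dotv v (H k w *m v) <= lam_hi * dotv v v) ->
    forall k, 0 <= f (x k w) - fs <= U k w.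
  move=> hw; elim=> [|k IH].
    by rewrite hx0 /= subr_ge0 fmin lexx.
  have [sHk bHk] := hw k.
  rewrite rec.
  have e : (N k)%:R^-1 *: \sum_(j < N k) gradF (x k w) (samples k j w) =
     gradf (x k w) - wbar k w by rewrite /wbar subKr.
  rewrite e.
  have st := step_ineq f gradf L lam_lo lam_hi tau fs (H k w) (x k w) (wbar k w)
     L0 lo0 lohi tau0 desc (PL (x k w)) sHk bHk.
  apply/andP; split; first by rewrite subr_ge0 fmin.
  apply: (le_trans st) => /=.
  case/andP: IH => V0 VUk.
  have hz : dotv (wbar k w) (wbar k w) = Z k w by rewrite /Z enorm_sq.
  rewrite hz -/rho0 -/Cn lerD2r.
  apply: (@le_trans _ _ (rho * (f (x k w) - fs))).
    by rewrite ler_wpM2r.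
  by rewrite ler_wpM2l.
have noiseZ k : exists Y : Omega -> R, [/\ P.-integrable setT (EFin \o Z k),
    P.-integrable setT (EFin \o Y),
    (\int[P]_w (Z k w)%:E = \int[P]_w (Y w)%:E)%E &
    {ae P, forall w, Y w <= (nu1 ^+ 2 * enorm (x k w) ^+ 2 + nu2 ^+ 2) / (N k)%:R}].
  have [[Y [[iX iY mY eqI] bY]] _] := noise k.
  exists Y; split => //; apply: eqI.
  have h0 := sigma_algebraC (@sigma_algebra0 _ setT
    [set A | exists (i : nat) (j : 'I_n) (B : set R),
          (i <= k)%N /\ measurable B /\ A = (fun w => x i w j 0) @^-1` B]).
  by rewrite setC0 in h0.
have mZ k : measurable_fun setT (Z k).
  have [Y [iX _ _ _]] := noiseZ k.
  exact/measurable_EFinP/(measurable_int _ iX).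
have mU k : measurable_fun setT (U k).
  elim: k => [|k IH] /=; first exact: measurable_cst.
  apply: measurable_funD; apply: measurable_funM => //; exact: measurable_cst.
set e := fun k => (\int[P]_w (U k w)%:E)%E.
have erec k : e k.+1 = (rho%:E * e k + Cn%:E * \int[P]_w (Z k w)%:E)%E.
  exact: (int_lin P (U k) (Z k) rho Cn (mU k) (mZ k) (U0 k) (Z0 k) rho_ge0 Cn0).
set c1 := 8 * nu1 ^+ 2 / tau.
set c2 := 2 * nu1 ^+ 2 * dotv xstar xstar + nu2 ^+ 2.
have c10 : 0 <= c1 by rewrite divr_ge0 ?mulr_ge0 ?sqr_ge0 // ltW.
have c20 : 0 <= c2.
  apply: addr_ge0; last exact: sqr_ge0.
  by apply: mulr_ge0; [apply: mulr_ge0; [by []|apply: sqr_ge0]|apply: dotv_ge0].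
have key w k : (forall k, (H k w)^T = H k w /\ forall v,
    lam_lo * dotv v v <= dotv v (H k w *m v) <= lam_hi * dotv v v) ->
    nu1 ^+ 2 * enorm (x k w) ^+ 2 + nu2 ^+ 2 <= c1 * U k w + c2.
  move=> hw; rewrite enorm_sq.
  have n1 := norm_bound (x k w) xstar.
  have g1 := gro (x k w).
  have /andP[_ v1] := VU w hw k.
  set D := dotv (x k w - xstar) (x k w - xstar) in n1 g1.
  have hD : D <= 4 / tau * U k w.
    rewrite -(ler_pM2l tau0).
    have -> : tau * (4 / tau * U k w) = 4 * U k w by field; rewrite gt_eqF.
    rewrite -/fs in g1; lra.
  have h1 : nu1 ^+ 2 * dotv (x k w) (x k w) <= nu1 ^+ 2 * (2 * D + 2 * dotv xstar xstar).
    by rewrite ler_wpM2l ?sqr_ge0.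
  have h2 : nu1 ^+ 2 * D <= nu1 ^+ 2 * (4 / tau * U k w) by rewrite ler_wpM2l ?sqr_ge0.
  have e2 : c1 * U k w = 2 * (nu1 ^+ 2 * (4 / tau * U k w)).
    by rewrite /c1; field; rewrite gt_eqF.
  rewrite e2 /c2; lra.
have eZ k : (\int[P]_w (Z k w)%:E <=
     (c1 / (N k)%:R)%:E * e k + (c2 / (N k)%:R)%:E)%E.
  have [Y [iX iY eqI bY]] := noiseZ k; rewrite eqI.
  have Ninv0 : 0 < ((N k)%:R : R)^-1 by rewrite invr_gt0 ltr0n Npos.
  pose Bd := fun w => c1 / (N k)%:R * U k w + c2 / (N k)%:R * 1.
  have m1 : measurable_fun setT (fun _ : Omega => (1 : R)) by exact: measurable_cst.
  have mB : measurable_fun setT Bd.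
    by apply: measurable_funD; apply: measurable_funM => //; exact: measurable_cst.
  have cN1 : 0 <= c1 / (N k)%:R by apply: mulr_ge0 => //; exact: ltW.
  have cN2 : 0 <= c2 / (N k)%:R by apply: mulr_ge0 => //; exact: ltW.
  have B0 w : 0 <= Bd w.
    by rewrite /Bd; apply: addr_ge0; apply: mulr_ge0.
  apply: (le_trans (int_Y_le P Y Bd iY mB B0 _)).
    apply: filterS2 aeH bY => w hw hy; apply: (le_trans hy).
    have := key w k hw; rewrite /Bd mulr1 [c1 / _ * _]mulrAC -mulrDl.
    by rewrite ler_pM2r.
  rewrite (int_lin P (U k) (fun=> 1) _ _ (mU k) m1 (U0 k)) //.
  rewrite (_ : (\int[P]_w (1%:E))%E = 1%E) ?mule1 //.
  by rewrite integral_cst // mul1e; apply: probability_setT.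
have e0 k : (0 <= e k)%E by apply: integral_ge0 => w _; rewrite lee_fin.
have IZ0 k : (0 <= \int[P]_w (Z k w)%:E)%E by apply: integral_ge0 => w _; rewrite lee_fin.
have IZfin k : e k \is a fin_num -> (\int[P]_w (Z k w)%:E)%E \is a fin_num.
  move=> ef; have h : ((c1 / (N k)%:R)%:E * e k + (c2 / (N k)%:R)%:E)%E \is a fin_num.
    by rewrite fin_numD fin_numM.
  rewrite ge0_fin_numE //; apply: (le_lt_trans (eZ k)).
  by move/fin_numPlt: h => /andP[].
have ef k : e k \is a fin_num.
  elim: k => [|k IH].
    rewrite /e /= (_ : (\int[P]_w ((f x0 - fs)%:E))%E = ((f x0 - fs)%:E * P setT)%E).
      by rewrite probability_setT mule1.
    exact: integral_cst.
  by rewrite erec fin_numD !fin_numM // IZfin.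
pose r k := fine (e k).
pose iz k := fine (\int[P]_w (Z k w)%:E)%E.
have er k : e k = (r k)%:E by rewrite /r fineK.
have eiz k : (\int[P]_w (Z k w)%:E)%E = (iz k)%:E by rewrite /iz fineK // IZfin.
have r0 k : 0 <= r k by rewrite -lee_fin -er.
have rrec k : r k.+1 <= rho * r k + (Cn * c1 * r k + Cn * c2) / (N k)%:R.
  have h1 : r k.+1 = rho * r k + Cn * iz k.
    by apply: EFin_inj; rewrite -er erec er eiz EFinD !EFinM.
  have h2 : iz k <= c1 / (N k)%:R * r k + c2 / (N k)%:R.
    by rewrite -lee_fin EFinD EFinM -er -eiz; exact: eZ k.
  rewrite h1.
  have h3 : Cn * iz k <= Cn * (c1 / (N k)%:R * r k + c2 / (N k)%:R) by rewrite ler_wpM2l.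
  have e3 : Cn * (c1 / (N k)%:R * r k + c2 / (N k)%:R) =
    (Cn * c1 * r k + Cn * c2) / (N k)%:R by ring.
  lra.
have [B hB] := series_bound r N rho (Cn * c1) (Cn * c2) r0 rho_ge0 rho_lt1
  (mulr_ge0 Cn0 c10) (mulr_ge0 Cn0 c20) Npos cvN rrec.
have mEU k : measurable_fun setT (fun w => (U k w)%:E).
  exact: ((@measurable_EFinP _ _ _ setT (U k)).2 (mU k)).
have sumle : (\sum_(k <oo) e k <= B%:E)%E.
  apply: lime_le; first exact: (is_cvg_nneseries (fun n _ _ => e0 n)).
  near=> m.
  under eq_bigr do rewrite er.
  by rewrite sumEFin lee_fin; exact: hB.
have intS : (\int[P]_w (\sum_(k <oo) (U k w)%:E) = \sum_(k <oo) e k)%E.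
  by rewrite integral_nneseries // => k w _; rewrite lee_fin.
have mS : measurable_fun setT (fun w => (\sum_(k <oo) (U k w)%:E)%E).
  exact: (@ge0_emeasurable_sum _ _ _ setT (fun k w => (U k w)%:E) predT
    (fun k w _ _ => U0 k w) (fun k _ => mEU k)).
have intg : P.-integrable setT (fun w => (\sum_(k <oo) (U k w)%:E)%E).
  apply/integrableP; split => //.
  rewrite (eq_integral (fun w => (\sum_(k <oo) (U k w)%:E)%E)); last first.
    move=> w _; rewrite gee0_abs //; apply: nneseries_ge0 => k _ _.
    by rewrite lee_fin.
  by rewrite intS (le_lt_trans sumle) // ltry.
apply: filterS2 aeH (integrable_ae measurableT intg) => w hw hfin.
have hv := VU w hw.
have U0c := fin_series_cvg0 (fun k => U k w) (fun k => U0 k w) (hfin I).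
apply: (@squeeze_cvgr _ _ _ _ (cst fs) (fun k => fs + U k w)).
- near=> k; have /andP[a b] := hv k; apply/andP; split; rewrite /cst; lra.
- exact: cvg_cst.
- rewrite -[X in _ --> X]addr0; apply: cvgD => //; exact: cvg_cst.
Unshelve. all: by end_near.
Qed.
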